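(* Let $d_1<d_2<d_3$ be positive integers with $\gcd(d_1,d_2,d_3)=1$ forming a minimal generating set. Let $r=r(N)$ satisfy $r(N)\to\infty$ and $r(N)/N\to0$ as $N\to\infty$. Let $\mathbb M_{N,r}$ be the set of integer vectors $\mathbf e=(Nd_1+j_1,Nd_2+j_2,Nd_3+j_3)$ with $-r\le j_i\le r$, $\gcd(e_1,e_2,e_3)=1$, and $\{e_1,e_2,e_3\}$ a minimal generating set. Define $$K_{N,r}=\frac{\sum_{\mathbf e\in\mathbb M_{N,r}} C(\mathbf e)}{\sum_{\mathbf e\in\mathbb M_{N,r}}\sqrt{e_1e_2e_3}}.$$ Then $\liminf_{N\to\infty}K_{N,r(N)}\ge\sqrt3$. In particular the conjectured value $g_3=\sqrt{2}$ (for which $\lim K_{N,r}$ would equal $\sqrt{2!}$) is not the limit.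
   Context: $\mathsf S(e_1,e_2,e_3)=\{c_1e_1+c_2e_2+c_3e_3: c_i\in\mathbb Z_{\ge0}\}$. The conductor $C(\mathbf e)$ is the smallest integer $s$ such that every integer $\ge s$ lies in $\mathsf S(e_1,e_2,e_3)$. A set of positive integers is a minimal generating set if no element is a nonnegative integer combination of the others. *)

(* Defs.v *)
From HB Require Import structures.
From mathcomp Require Import all_boot all_order all_algebra.
From mathcomp Require Import all_classical all_reals all_analysis.
Set Implicit Arguments. Unset Strict Implicit. Unset Printing Implicit Defensive.
Import Order.TTheory GRing.Theory Num.Theory.

Definition inS3 (e1 e2 e3 n : nat) : Prop :=
  exists c1 c2 c3 : nat, n = c1 * e1 + c2 * e2 + c3 * e3.

Definition minimal_gen3 (e1 e2 e3 : nat) : Prop :=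
  [/\ 0 < e1, 0 < e2 & 0 < e3] /\
  [/\ ~ (exists a b : nat, e1 = a * e2 + b * e3),
      ~ (exists a b : nat, e2 = a * e1 + b * e3) &
      ~ (exists a b : nat, e3 = a * e1 + b * e2)].

Definition is_conductor_bound (e1 e2 e3 s : nat) : Prop :=
  forall n : nat, s <= n -> inS3 e1 e2 e3 n.

(* conductor C(e): smallest s such that every integer >= s lies in S(e);
   (set to 0 when no such s exists, which never happens under gcd = 1) *)
Definition conductor (e1 e2 e3 : nat) : nat :=
  match pselect (exists s, is_conductor_bound e1 e2 e3 s) with
  | left h =>
      @ex_minn (fun s => `[< is_conductor_bound e1 e2 e3 s >])
        (let: ex_intro s hs := h in ex_intro _ s (asboolT hs))
  | right _ => 0
  end.

(* the index triple (i1,i2,i3) in 'I_(2r+1)^3 encodes j_k = i_k - r in [-r,r];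
   the corresponding integer vector e_k = N d_k + j_k *)
Definition ecomp (N d r : nat) (i : 'I_(2 * r + 1)) : int :=
  (N * d)%:Z + (i%:Z - r%:Z).

Definition trip (r : nat) := ('I_(2 * r + 1) * 'I_(2 * r + 1) * 'I_(2 * r + 1))%type.

Definition inM (N d1 d2 d3 r : nat) (i : trip r) : Prop :=
  let: (i1, i2, i3) := i in
  let x1 := ecomp N d1 i1 in
  let x2 := ecomp N d2 i2 in
  let x3 := ecomp N d3 i3 in
  [/\ (0 < x1)%R, (0 < x2)%R, (0 < x3)%R,
      gcdn `|x1|%N (gcdn `|x2|%N `|x3|%N) = 1 &
      minimal_gen3 `|x1|%N `|x2|%N `|x3|%N].

Definition Cof (N d1 d2 d3 r : nat) (i : trip r) : nat :=
  let: (i1, i2, i3) := i in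
  conductor `|ecomp N d1 i1|%N `|ecomp N d2 i2|%N `|ecomp N d3 i3|%N.

Definition prodof (N d1 d2 d3 r : nat) (i : trip r) : nat :=
  let: (i1, i2, i3) := i in
  (`|ecomp N d1 i1| * `|ecomp N d2 i2| * `|ecomp N d3 i3|)%N.

Local Open Scope ring_scope.

Definition K (R : realType) (d1 d2 d3 N r : nat) : R :=
  (\sum_(i : trip r | `[< inM N d1 d2 d3 i >]) ((Cof N d1 d2 d3 i)%:R : R))
  / (\sum_(i : trip r | `[< inM N d1 d2 d3 i >]) Num.sqrt ((prodof N d1 d2 d3 i)%:R : R)).

(* Main.v *)
Require Import Defs.
From HB Require Import structures.
From mathcomp Require Import all_boot all_order all_algebra.
From mathcomp Require Import all_classical all_reals all_analysis.
From mathcomp Require Import zify ring lra.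
From Stdlib Require Import Classical.
Import Order.TTheory GRing.Theory Num.Theory.
Import numFieldNormedType.Exports.

Local Open Scope nat_scope.

Definition fv (b c y z : nat) := y*b + z*c.
Definition keylt (b c y' z' y z : nat) : Prop :=
  fv b c y' z' < fv b c y z \/ (fv b c y' z' = fv b c y z /\ y' < y).
Definition Dm (a b c y z : nat) : Prop :=
  forall y' z', fv b c y' z' = fv b c y z %[mod a] -> ~ keylt b c y' z' y z.

Lemma cong_sub_ex a x y : y <= x -> x = y %[mod a] -> exists k, x = y + k * a.
Proof.
move=> le /eqP; rewrite eqn_mod_dvd // => /dvdnP[k hk]; exists k; lia.
Qed.

Arguments cong_sub_ex [a x y].
Lemma cong_cancel a x y t : x + t = y + t %[mod a] -> x = y %[mod a].
Proof. by move/eqP; rewrite eqn_modDr => /eqP. Qed.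

Lemma cong_addr a x y t : x = y %[mod a] -> x + t = y + t %[mod a].
Proof. by move/eqP=> h; apply/eqP; rewrite eqn_modDr. Qed.

Lemma cong_mulk a x k : x + k * a = x %[mod a].
Proof. by rewrite addnC modnMDl. Qed.

Lemma Dm_exists a b c y z : 0 < b ->
  exists y' z', Dm a b c y' z' /\ fv b c y' z' = fv b c y z %[mod a]
     /\ fv b c y' z' <= fv b c y z.
Proof.
move=> b0.
suff H : forall n y z, (fv b c y z)^2 + y <= n -> exists y' z', Dm a b c y' z' /\ fv b c y' z' = fv b c y z %[mod a]
     /\ fv b c y' z' <= fv b c y z by apply: (H _ y z (leqnn _)).
elim=> [|n IH] y0 z0 hm.
  have y00 : y0 = 0 by lia.
  have f0 : fv b c y0 z0 = 0 by move: hm; rewrite /fv; nia.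
  exists y0, z0; split=> //; move=> y' z' _ [|[]]; rewrite f0 ?y00; lia.
destruct (classic (Dm a b c y0 z0)) as [hD|hD]; first by exists y0, z0.
have [y1 [z1 [hc hk]]] : exists y1 z1, fv b c y1 z1 = fv b c y0 z0 %[mod a] /\ keylt b c y1 z1 y0 z0.
  apply: NNPP => hn; apply: hD => y' z' hc hk; apply: hn; by exists y', z'.
have hy1 : y1 <= fv b c y1 z1 by rewrite /fv; nia.
have hy0 : y0 <= fv b c y0 z0 by rewrite /fv; nia.
have hm1 : (fv b c y1 z1)^2 + y1 <= n.
  case: hk => [hl|[he hl]]; last by rewrite he; lia.
  move: hm; set F0 := fv b c y0 z0; set F1 := fv b c y1 z1 => hm.
  have : (F1 + 1)*(F1 + 1) <= F0*F0 by apply: leq_mul; lia.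
  move: hm; rewrite !expnS !expn0 !muln1; nia.
have [y2 [z2 [h2 [h2c h2l]]]] := IH _ _ hm1.
exists y2, z2; split=> //; split; first by rewrite h2c.
case: hk; lia.
Qed.

Lemma fvD b c y z y0 z0 : fv b c (y + y0) (z + z0) = fv b c y z + fv b c y0 z0.
Proof. rewrite /fv !mulnDl; lia. Qed.

Lemma Dm_down a b c y z y0 z0 : Dm a b c y z -> y0 <= y -> z0 <= z -> Dm a b c y0 z0.
Proof.
move=> hD hy hz y' z' hc hk.
apply: (hD (y' + (y - y0)) (z' + (z - z0))).
  have -> : fv b c y z = fv b c (y0 + (y - y0)) (z0 + (z - z0)) by congr fv; lia.
  by rewrite !fvD; apply: cong_addr.
move: hk; rewrite /keylt.
have -> : fv b c y z = fv b c (y0 + (y - y0)) (z0 + (z - z0)) by congr fv; lia.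
rewrite !fvD; lia.
Qed.

Arguments Dm_down [a b c y z y0 z0].
Lemma Dm_unique a b c y z y' z' : 0 < c -> Dm a b c y z -> Dm a b c y' z' ->
  fv b c y z = fv b c y' z' %[mod a] -> y = y' /\ z = z'.
Proof.
move=> c0 hD hD' hc.
have [hlt|hge] := ltnP (fv b c y z) (fv b c y' z').
  by exfalso; apply: (hD' y z) => //; left.
have [hlt2|hge2] := ltnP (fv b c y' z') (fv b c y z).
  by exfalso; apply: (hD y' z') => //; left.
have he : fv b c y z = fv b c y' z' by lia.
have [hy|hy] := ltnP y y'.
  by exfalso; apply: (hD' y z) => //; right.
have [hy2|hy2] := ltnP y' y.
  by exfalso; apply: (hD y' z') => //; right; split.
have yy : y = y' by lia.
split=> //; move: he; rewrite /fv yy => he.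
have : z * c = z' * c by lia.
by move/eqP; rewrite eqn_pmul2r // => /eqP.
Qed.

Arguments Dm_unique [a b c y z y' z'].
Lemma Dm00 a b c : Dm a b c 0 0.
Proof. move=> y' z' _; rewrite /keylt /fv; lia. Qed.

Lemma Dm_notS a b c y z n : 0 < a -> Dm a b c y z -> n + a = fv b c y z -> ~ inS3 a b c n.
Proof.
move=> a0 hD hn [c1 [c2 [c3 e]]].
apply: (hD c2 c3).
  have -> : fv b c y z = fv b c c2 c3 + (c1 + 1) * a by rewrite -hn e /fv; lia.
  by rewrite cong_mulk.
left; rewrite -hn e /fv; lia.
Qed.

Arguments Dm_notS [a b c y z n].
Lemma ex_min_nat (P : nat -> Prop) : (exists n, P n) -> exists n, P n /\ forall m, m < n -> ~ P m.
Proof.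
move=> [n hn].
suff H : forall k, forall n, n <= k -> P n -> exists n, P n /\ forall m, m < n -> ~ P m by exact: (H n n).
elim=> [|k IH] n0 hle hP.
  by exists n0; split=> // m hm; lia.
destruct (classic (exists m, m < n0 /\ P m)) as [[m [hm hPm]]|hno].
  by apply: (IH m) => //; lia.
by exists n0; split=> // m hm hPm; apply: hno; exists m.
Qed.

Lemma residue_all a b c n : 0 < a -> 0 < b -> 0 < c -> gcdn a (gcdn b c) = 1 ->
  exists y z, fv b c y z = n %[mod a].
Proof.
move=> a0 b0 c0 g1.
set g := gcdn b c.
have g0 : 0 < g by rewrite gcdn_gt0 b0.
case: (egcdnP c b0) => km kn hk _.
have ga : gcdn g a = 1 by rewrite gcdnC.
case: (egcdnP a g0) => s kn' hs _.
rewrite ga in hs.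
exists (n * s * km), (n * s * (kn * (a - 1))).
have -> : fv b c (n * s * km) (n * s * (kn * (a - 1))) = n + (n * kn' + n * s * kn * c) * a.
  rewrite /fv.
  have e1 : km * b + kn * (a - 1) * c = g + (kn * c) * a.
    have -> : a = (a - 1) + 1 by lia.
    rewrite hk /g; nia.
  have e2 : n * s * km * b + n * s * (kn * (a - 1)) * c = n * s * (km * b + kn * (a - 1) * c) by nia.
  rewrite e2 e1.
  have e3 : n * s * g = n * (s * g) by nia.
  nia.
by rewrite cong_mulk.
Qed.
Arguments residue_all [a b c] n.
Lemma twoab (x y : nat) : 2*(x*y) <= x*x + y*y.
Proof.
wlog le: x y / x <= y => [H|]. case: (leqP x y) => h; [exact: H| rewrite (mulnC x y) (addnC (x*x)); apply: H; lia].
have [d ->] : exists d, y = x + d by exists (y - x); lia.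
nia.
Qed.
Lemma sq3 (U V W : nat) : 3*(U*W + U*V + V*W) <= (U+V+W)*(U+V+W).
Proof.
have := twoab U V; have := twoab U W; have := twoab V W. nia.
Qed.
Lemma ineq_core p q p' q' b c : q'*c <= p'*b ->
  3*((p*q + p*q' + p'*q)*b*c) <= ((p+p')*b + q*c)*((p+p')*b + q*c).
Proof.
move=> h.
have e : (p*q + p*q' + p'*q)*b*c = (p*b)*(q*c) + (p*b)*(q'*c) + (p'*b)*(q*c) by nia.
have e2 : (p+p')*b + q*c = p*b + p'*b + q*c by nia.
rewrite e e2.
have := sq3 (p*b) (p'*b) (q*c).
have : (p*b)*(q'*c) <= (p*b)*(p'*b) by apply: leq_mul.
lia.
Qed.

Lemma cong_via a X Y T E1 E2 : X + T = E1 -> Y + T = E2 -> E1 = E2 %[mod a] -> X = Y %[mod a].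
Proof. move=> h1 h2 h; apply: (@cong_cancel _ _ _ T); by rewrite h1 h2. Qed.

Ltac nomod := repeat match goal with H : context [modn] |- _ => clear H end.
Ltac mlia := nomod; lia.
Ltac mnia := nomod; nia.

Lemma davison a b c : 0 < a -> 0 < b -> 0 < c -> gcdn a (gcdn b c) = 1 ->
  (exists s, is_conductor_bound a b c s) /\
  exists X, (forall s, is_conductor_bound a b c s -> X <= s + a + b + c) /\ 3*a*b*c <= X*X.
Proof.
move=> a0 b0 c0 g1.
have notDa0 : ~ Dm a b c a 0.
  move=> h; apply: (h 0 0); first by rewrite /fv !mul0n !addn0 (mulnC a b) modnMl mod0n.
  by left; rewrite /fv; mnia.
have notD0a : ~ Dm a b c 0 a.
  move=> h; apply: (h 0 0); first by rewrite /fv !mul0n !add0n (mulnC a c) modnMl mod0n.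
  by left; rewrite /fv; mnia.
have [al [[al0 hal] halmin]] := ex_min_nat (fun y => 0 < y /\ ~ Dm a b c y 0) (ex_intro _ a (conj a0 notDa0)).
have [be [[be0 hbe] hbemin]] := ex_min_nat (fun z => 0 < z /\ ~ Dm a b c 0 z) (ex_intro _ a (conj a0 notD0a)).
have Dy : forall y, y < al -> Dm a b c y 0.
  move=> y hy; case: (posnP y) => [->|yp]; first exact: Dm00.
  by apply: NNPP => hn; apply: (halmin y hy).
have Dz : forall z, z < be -> Dm a b c 0 z.
  move=> z hz; case: (posnP z) => [->|zp]; first exact: Dm00.
  by apply: NNPP => hn; apply: (hbemin z hz).
have HDy : forall y z, Dm a b c y z -> y < al.
  move=> y z h; rewrite ltnNge; apply/negP => hle; apply: hal; exact: (Dm_down h hle (leq0n z)).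
have HDz : forall y z, Dm a b c y z -> z < be.
  move=> y z h; rewrite ltnNge; apply/negP => hle; apply: hbe; exact: (Dm_down h (leq0n y) hle).
have [y0 [z0 [hD0 [hc0 hl0]]]] := Dm_exists a b c al 0 b0.
have y00 : y0 = 0.
  case: (posnP y0) => // y0p; exfalso.
  have y0al := HDy _ _ hD0.
  have d1 : Dm a b c (al - y0) 0 by apply: Dy; mlia.
  have d2 : Dm a b c 0 z0 by apply: (Dm_down hD0) => //.
  have hc : fv b c (al - y0) 0 = fv b c 0 z0 %[mod a].
    apply: (@cong_via _ _ _ (y0 * b) (fv b c al 0) (fv b c y0 z0)); try (rewrite /fv; mnia).
    by rewrite hc0.
  have [] := Dm_unique c0 d1 d2 hc; mlia.
subst y0.
have z0be := HDz _ _ hD0.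
have [k1 hk1] := cong_sub_ex hl0 (esym hc0).
have [y1 [z1 [hD1 [hc1 hl1]]]] := Dm_exists a b c 0 be b0.
have z10 : z1 = 0.
  case: (posnP z1) => // z1p; exfalso.
  have z1be := HDz _ _ hD1.
  have d1 : Dm a b c 0 (be - z1) by apply: Dz; mlia.
  have d2 : Dm a b c y1 0 by apply: (Dm_down hD1) => //.
  have hc : fv b c 0 (be - z1) = fv b c y1 0 %[mod a].
    apply: (@cong_via _ _ _ (z1 * c) (fv b c 0 be) (fv b c y1 z1)); try (rewrite /fv; mnia).
    by rewrite hc1.
  have [] := Dm_unique c0 d1 d2 hc; mlia.
subst z1.
have y1al := HDy _ _ hD1.
have [k2 hk2] := cong_sub_ex hl1 (esym hc1).
have [p hp] : exists p, al = p + y1 by exists (al - y1); mlia.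
have [q hq] : exists q, be = q + z0 by exists (be - z0); mlia.
have p0 : 0 < p by mlia.
have q0 : 0 < q by mlia.
have Lsh : forall y z, y < al -> z < be -> (y < p \/ z < q) -> Dm a b c y z.
  move=> y z hy hz hL.
  have [y2 [z2 [hD2 [hc2 _]]]] := Dm_exists a b c y z b0.
  have hy2 := HDy _ _ hD2; have hz2 := HDz _ _ hD2.
  case: (leqP y2 y) => le1; case: (leqP z2 z) => le2.
  - have [vy evy] : exists vy, y = y2 + vy by exists (y - y2); mlia.
    have [vz evz] : exists vz, z = z2 + vz by exists (z - z2); mlia.
    have hv : fv b c vy vz = fv b c 0 0 %[mod a].
      apply: (@cong_via _ _ _ (fv b c y2 z2) (fv b c y z) (fv b c y2 z2)).
      + by rewrite evy evz fvD addnC.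
      + by rewrite /fv; mlia.
      + by rewrite hc2.
    case: (posnP vy) => vy0; case: (posnP vz) => vz0.
    + have e1 : y = y2 by mlia.
      have e2 : z = z2 by mlia.
      by rewrite e1 e2.
    + exfalso; have d1 : Dm a b c 0 vz by apply: Dz; mlia.
      have hc' : fv b c 0 vz = fv b c 0 0 %[mod a] by rewrite -hv vy0.
      have [] := Dm_unique c0 d1 (Dm00 a b c) hc'. mlia.
    + exfalso; have d1 : Dm a b c vy 0 by apply: Dy; mlia.
      have hc' : fv b c vy 0 = fv b c 0 0 %[mod a] by rewrite -hv vz0.
      have [] := Dm_unique c0 d1 (Dm00 a b c) hc'. mlia.
    + exfalso; case: hL => hL.
      * have d1 : Dm a b c (vy + y1) 0 by apply: Dy; mlia.
        have d2 : Dm a b c 0 (be - vz) by apply: Dz; mlia.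
        have hc : fv b c (vy + y1) 0 = fv b c 0 (be - vz) %[mod a].
          apply: (@cong_via _ _ _ (vz * c) (fv b c vy vz + fv b c y1 0) (fv b c 0 be)).
          + by rewrite /fv; mnia.
          + by rewrite /fv; mnia.
          + rewrite hk2 cong_mulk; apply: (@cong_via _ _ _ 0 (fv b c vy vz + fv b c y1 0) (fv b c 0 0 + fv b c y1 0)); rewrite ?addn0 //.
            by apply: cong_addr.
        have [] := Dm_unique c0 d1 d2 hc; mlia.
      * have d1 : Dm a b c (al - vy) 0 by apply: Dy; mlia.
        have d2 : Dm a b c 0 (vz + z0) by apply: Dz; mlia.
        have hc : fv b c (al - vy) 0 = fv b c 0 (vz + z0) %[mod a].
          apply: (@cong_via _ _ _ (vy * b) (fv b c al 0) (fv b c vy vz + fv b c 0 z0)).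
          + by rewrite /fv; mnia.
          + by rewrite /fv; mnia.
          + rewrite hk1 cong_mulk; apply: (@cong_via _ _ _ 0 (fv b c 0 0 + fv b c 0 z0) (fv b c vy vz + fv b c 0 z0)); rewrite ?addn0 //.
            by apply: cong_addr.
        have [] := Dm_unique c0 d1 d2 hc; mlia.
  - case: (ltnP y2 y) => lt1.
    + exfalso.
      have d1 : Dm a b c (y - y2) 0 by apply: Dy; mlia.
      have d2 : Dm a b c 0 (z2 - z) by apply: Dz; mlia.
      have hc : fv b c (y - y2) 0 = fv b c 0 (z2 - z) %[mod a].
        apply: (@cong_via _ _ _ (y2 * b + z * c) (fv b c y z) (fv b c y2 z2)).
        + by rewrite /fv; mnia.
        + by rewrite /fv; mnia.
        + by rewrite hc2.
      have [] := Dm_unique c0 d1 d2 hc; mlia.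
    + by apply: (Dm_down hD2); mlia.
  - case: (ltnP z2 z) => lt2.
    + exfalso.
      have d1 : Dm a b c 0 (z - z2) by apply: Dz; mlia.
      have d2 : Dm a b c (y2 - y) 0 by apply: Dy; mlia.
      have hc : fv b c 0 (z - z2) = fv b c (y2 - y) 0 %[mod a].
        apply: (@cong_via _ _ _ (y * b + z2 * c) (fv b c y z) (fv b c y2 z2)).
        + by rewrite /fv; mnia.
        + by rewrite /fv; mnia.
        + by rewrite hc2.
      have [] := Dm_unique c0 d1 d2 hc; mlia.
    + by apply: (Dm_down hD2); mlia.
  - by apply: (Dm_down hD2); mlia.
have P1 : Dm a b c (al - 1) (q - 1) by apply: Lsh; mlia.
have P2 : Dm a b c (p - 1) (be - 1) by apply: Lsh; mlia.
have bnd : forall y z s, Dm a b c y z -> is_conductor_bound a b c s -> fv b c y z <= s + a.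
  move=> y z s hD hs; rewrite leqNgt; apply/negP => hlt.
  apply: (@Dm_notS a b c y z (fv b c y z - a) a0 hD); first by mlia.
  apply: hs; mlia.
split.
  exists (al * b + be * c) => n hn.
  have [y [z hyz]] := residue_all n a0 b0 c0 g1.
  have [y' [z' [hD' [hc' _]]]] := Dm_exists a b c y z b0.
  have hy' := HDy _ _ hD'; have hz' := HDz _ _ hD'.
  have hle : fv b c y' z' <= n by rewrite /fv; mnia.
  have hc'' : n = fv b c y' z' %[mod a] by rewrite hc' hyz.
  have [k hk] := cong_sub_ex hle hc''.
  by exists k, y', z'; rewrite hk /fv; mlia.
set X := al * b + q * c.
set Y := p * b + be * c.
exists (maxn X Y); split.
  move=> s hs; rewrite geq_max; apply/andP; split.
    have := bnd _ _ _ P1 hs; rewrite /X /fv; mnia.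
  have := bnd _ _ _ P2 hs; rewrite /Y /fv; mnia.
set A := p * q + p * z0 + y1 * q.
have hAa : a <= A.
  have H1 : (p + y1) * b = z0 * c + k1 * a by move: hk1; rewrite /fv hp; mlia.
  have H2 : (q + z0) * c = y1 * b + k2 * a by move: hk2; rewrite /fv hq; mlia.
  have eb : A * b = a * (k1 * (q + z0) + k2 * z0) by rewrite /A; mnia.
  have ec : A * c = a * (k2 * (p + y1) + k1 * y1) by rewrite /A; mnia.
  have hd : a %| A * gcdn a (gcdn b c).
    rewrite !muln_gcdr !dvdn_gcd dvdn_mull //= eb ec !dvdn_mulr //.
  rewrite g1 muln1 in hd; apply: dvdn_leq => //; rewrite /A; mnia.
have key : 3 * (A * b * c) <= maxn X Y * maxn X Y.
  case: (leqP (z0 * c) (y1 * b)) => h.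
    have := ineq_core p q y1 z0 b c h.
    have : X <= maxn X Y := leq_maxl X Y.
    rewrite /X hp => hX hi; apply: (leq_trans hi); exact: leq_mul.
  have h' : y1 * b <= z0 * c by mlia.
  have := ineq_core q p z0 y1 c b h'.
  have : Y <= maxn X Y := leq_maxr X Y.
  rewrite /Y hq => hY hi.
  have eA : (q * p + q * y1 + z0 * p) * c * b = A * b * c by rewrite /A; mnia.
  have eY : (q + z0) * c + p * b = p * b + (q + z0) * c by mlia.
  rewrite eA eY in hi; apply: (leq_trans hi); exact: leq_mul.
apply: leq_trans key.
have : a * b * c <= A * b * c by apply: leq_mul => //; apply: leq_mul.
mlia.
Qed.

Lemma conductor_bound a b c : (exists s, is_conductor_bound a b c s) ->
  is_conductor_bound a b c (conductor a b c).
Proof.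
move=> h; rewrite /conductor; case: pselect => // h'.
case: ex_minnP => m /asboolP hm _; exact: hm.
Qed.

Lemma davison_cond a b c : 0 < a -> 0 < b -> 0 < c -> gcdn a (gcdn b c) = 1 ->
  3*(a*b*c) <= (conductor a b c + (a + b + c)) * (conductor a b c + (a + b + c)).
Proof.
move=> a0 b0 c0 g1; have [hex [X [hX hX2]]] := davison a b c a0 b0 c0 g1.
have h : X <= conductor a b c + (a + b + c) by move: (hX _ (conductor_bound a b c hex)); rewrite !addnA.
apply: (leq_trans _ (leq_mul h h)).
by rewrite !mulnA.
Qed.

Lemma ecompE N d r (i : 'I_(2 * r + 1)) : r <= N * d ->
  ecomp N d i = Posz (N * d + i - r).
Proof. move=> h; rewrite /ecomp; lia. Qed.

Lemma sbound N d1 d2 d3 r m i1 i2 i3 x1 x2 x3 :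
  0 < d1 -> d1 < d2 -> d2 < d3 -> i1 <= 2 * r -> i2 <= 2 * r -> i3 <= 2 * r ->
  2 * r <= N -> 72 * ((d3 + 1) * (d3 + 1)) * m <= N ->
  x1 = N * d1 + i1 - r -> x2 = N * d2 + i2 - r -> x3 = N * d3 + i3 - r ->
  (x1 + x2 + x3) * (x1 + x2 + x3) * m <= x1 * x2 * x3.
Proof.
move=> hd1 hd12 hd23 hi1 hi2 hi3 hrN hN ex1 ex2 ex3.
have hNd1 : N <= N * d1 by rewrite leq_pmulr.
have hNd2 : N * d1 <= N * d2 by rewrite leq_mul2l; lia.
have hNd3 : N * d2 <= N * d3 by rewrite leq_mul2l; lia.
have l1 : N <= 2 * x1 by rewrite ex1; lia.
have l2 : N <= 2 * x2 by rewrite ex2; lia.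
have l3 : N <= 2 * x3 by rewrite ex3; lia.
set D := N * (d3 + 1).
have hD : N * d3 + N = D by rewrite /D mulnDr muln1.
have u1 : x1 <= D by rewrite ex1; lia.
have u2 : x2 <= D by rewrite ex2; lia.
have u3 : x3 <= D by rewrite ex3; lia.
have hs : x1 + x2 + x3 <= 3 * D by lia.
have hp : N * N * N <= (2 * x1) * (2 * x2) * (2 * x3) by apply: leq_mul; [apply: leq_mul|].
have hs2 : (x1 + x2 + x3) * (x1 + x2 + x3) * m <= (3 * D) * (3 * D) * m by apply: leq_mul => //; apply: leq_mul.
have hNN : 72 * ((d3 + 1) * (d3 + 1)) * m * (N * N) <= N * (N * N) by apply: leq_mul.
have e1 : (3 * D) * (3 * D) * m * 8 = 72 * ((d3 + 1) * (d3 + 1)) * m * (N * N) by rewrite /D; nia.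
have e2 : (2 * x1) * (2 * x2) * (2 * x3) = 8 * (x1 * x2 * x3) by nia.
have : (x1 + x2 + x3) * (x1 + x2 + x3) * m * 8 <= 8 * (x1 * x2 * x3).
  apply: (leq_trans (leq_mul hs2 (leqnn 8))); rewrite e1 -e2; apply: (leq_trans hNN); nia.
lia.
Qed.

Lemma wit_min N d1 d2 d3 j1 j2 j3 B :
  0 < d1 -> d1 < d2 -> d2 < d3 -> minimal_gen3 d1 d2 d3 ->
  j1 <= B -> j2 <= B -> j3 <= B -> 2 * d3 * B + B < N ->
  minimal_gen3 (N*d1+j1) (N*d2+j2) (N*d3+j3).
Proof.
move=> hd1 hd12 hd23 [_ [m1 m2 m3]] hj1 hj2 hj3 hN.
have hNd1 : N <= N * d1 by rewrite leq_pmulr.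
have hNd2 : N * d1 + N <= N * d2 by rewrite -mulnSr leq_mul2l; lia.
have hNd3 : N * d2 + N <= N * d3 by rewrite -mulnSr leq_mul2l; lia.
have x12 : N * d1 + j1 < N * d2 + j2 by lia.
have x23 : N * d2 + j2 < N * d3 + j3 by lia.
split; first by split; lia.
split.
- move=> [a [b e]].
  case: (posnP a) => a0; case: (posnP b) => b0.
  + move: e; rewrite a0 b0; lia.
  + have : N * d3 + j3 <= b * (N * d3 + j3) by rewrite leq_pmull.
    move: e; lia.
  + have : N * d2 + j2 <= a * (N * d2 + j2) by rewrite leq_pmull.
    move: e; lia.
  + have : N * d2 + j2 <= a * (N * d2 + j2) by rewrite leq_pmull.
    move: e; lia.
- move=> [a [b e]].
  case: (posnP b) => b0; last first.
    have : N * d3 + j3 <= b * (N * d3 + j3) by rewrite leq_pmull.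
    move: e; lia.
  move: e; rewrite b0 mul0n addn0 => e.
  case: (ltngtP (a * d1) d2) => h.
  + have ha : a <= d2 by move: h; nia.
    have : a * j1 <= d2 * B by apply: leq_mul.
    have : N * (a * d1) <= N * (d2 - 1) by rewrite leq_mul2l; lia.
    have : N * (d2 - 1) + N = N * d2 by rewrite -mulnSr; congr muln; lia.
    have : d2 * B <= 2 * d3 * B by rewrite leq_mul2r; lia.
    move: e; nia.
  + have : N * d2 + N <= N * (a * d1) by rewrite -mulnSr leq_mul2l; lia.
    move: e; nia.
  + apply: m2; exists a, 0; lia.
- move=> [a [b e]].
  case: (ltngtP (a * d1 + b * d2) d3) => h.
  + have ha : a <= d3 by move: h; nia.
    have hb : b <= d3 by move: h; nia.
    have : a * j1 <= d3 * B by apply: leq_mul.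
    have : b * j2 <= d3 * B by apply: leq_mul.
    have : N * (a * d1 + b * d2) <= N * (d3 - 1) by rewrite leq_mul2l; lia.
    have : N * (d3 - 1) + N = N * d3 by rewrite -mulnSr; congr muln; lia.
    move: e; nia.
  + have : N * d3 + N <= N * (a * d1 + b * d2) by rewrite -mulnSr leq_mul2l; lia.
    move: e; nia.
  + by apply: m3; exists a, b.
Qed.

Lemma witness_nat d1 d2 d3 : 0 < d1 -> d1 < d2 -> d2 < d3 -> minimal_gen3 d1 d2 d3 ->
  exists B, forall N, B <= N -> exists j1 j2 j3, [/\ j1 <= B, j2 <= B, j3 <= B,
     gcdn (N*d1+j1) (gcdn (N*d2+j2) (N*d3+j3)) = 1 &
     minimal_gen3 (N*d1+j1) (N*d2+j2) (N*d3+j3)].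
Proof.
move=> hd1 hd12 hd23 hmin.
have d20 : 0 < d2 by lia.
set g := gcdn d2 d1.
have g0 : 0 < g by rewrite gcdn_gt0 d20.
have gd1 : g <= d1 by apply: dvdn_leq => //; exact: dvdn_gcdr.
case: (egcdnP d1 d20) => km kn hk hkn.
have kn2 : kn < d2 by move: hkn g0; clear; nia.
have km1 : km <= d1 by move: hk kn2 gd1 d20; rewrite -/g; clear; nia.
set B0 := d1 + d2 + g + 1.
exists (2 * d3 * B0 + B0 + 1) => N hN.
set rho := (N * d3) %% g.
have hrho : rho < g by rewrite ltn_pmod.
have hdiv := divn_eq (N * d3) g.
exists km, kn, (g - rho + 1).
have hB0 : B0 <= 2 * d3 * B0 + B0 + 1 by lia.
split; try lia.
  set G := gcdn _ _.
  have G1 : G %| N * d1 + km by exact: dvdn_gcdl.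
  have G2 : G %| N * d2 + kn by rewrite /G; apply: (dvdn_trans (dvdn_gcdr _ _)); exact: dvdn_gcdl.
  have G3 : G %| N * d3 + (g - rho + 1) by rewrite /G; apply: (dvdn_trans (dvdn_gcdr _ _)); exact: dvdn_gcdr.
  have e12 : d2 * (N * d1 + km) = d1 * (N * d2 + kn) + g by move: hk; rewrite -/g; clear; nia.
  have Gg : G %| g.
    have : G %| d2 * (N * d1 + km) by exact: dvdn_mull.
    by rewrite e12 dvdn_addr //; exact: dvdn_mull.
  have e3 : N * d3 + (g - rho + 1) = (N * d3 %/ g + 1) * g + 1.
    move: hdiv hrho; rewrite -/rho; generalize (N * d3 %/ g) => q; generalize (N * d3) => x; clear; lia.
  move: G3; rewrite e3 dvdn_addr ?dvdn1; first by move/eqP.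
  exact: dvdn_mull.
apply: (@wit_min N d1 d2 d3 km kn (g - rho + 1) B0) => //; lia.
Qed.

Local Open Scope classical_set_scope.
Local Open Scope ring_scope.

Lemma per_i (R : realType) (C s P m : nat) (e : R) : (0 < m)%N ->
  (3 * P <= (C + s) * (C + s))%N -> (s * s * m <= P)%N -> 1 <= m%:R * e ^+ 2 -> 0 < e ->
  (Num.sqrt 3 - e) * Num.sqrt (P%:R) <= C%:R.
Proof.
move=> m0 h3 hs hme e0.
have h1 : Num.sqrt 3 * Num.sqrt (P%:R) <= C%:R + s%:R :> R.
  rewrite -sqrtrM ?ler0n //.
  have : 3 * P%:R <= (C%:R + s%:R) ^+ 2 :> R.
    have := h3; rewrite -(ler_nat R) !natrM natrD expr2 => ->; done.
  move/ler_wsqrtr; rewrite sqrtr_sqr ger0_norm //; exact: addr_ge0.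
have h2 : s%:R <= e * Num.sqrt (P%:R).
  have hsq : s%:R ^+ 2 <= e ^+ 2 * P%:R :> R.
    have hP : (s * s * m)%:R <= P%:R :> R by rewrite ler_nat.
    rewrite natrM natrM in hP.
    have hs0 : 0 <= s%:R ^+ 2 :> R by exact: sqr_ge0.
    apply: (le_trans (y := s%:R ^+ 2 * (m%:R * e ^+ 2))).
      by rewrite -{1}(mulr1 (s%:R ^+ 2)) ler_wpM2l.
    rewrite mulrA (mulrC (e ^+ 2)); apply: ler_wpM2r; first exact: sqr_ge0.
    by rewrite expr2.
  move/ler_wsqrtr: hsq; rewrite sqrtr_sqr sqrtrM ?sqr_ge0 // sqrtr_sqr !ger0_norm //; exact: ltW.
rewrite mulrBl; lra.
Qed.

Lemma K_bound (R : realType) d1 d2 d3 N r m (e : R) B :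
  (0 < d1)%N -> (d1 < d2)%N -> (d2 < d3)%N ->
  (forall N, (B <= N)%N -> exists j1 j2 j3, [/\ (j1 <= B)%N, (j2 <= B)%N, (j3 <= B)%N,
     gcdn (N*d1+j1) (gcdn (N*d2+j2) (N*d3+j3)) = 1 &
     minimal_gen3 (N*d1+j1) (N*d2+j2) (N*d3+j3)]) ->
  (B <= r)%N -> (2 * r <= N)%N -> (B <= N)%N ->
  (72 * ((d3 + 1) * (d3 + 1)) * m <= N)%N -> (0 < m)%N -> 1 <= m%:R * e ^+ 2 -> 0 < e ->
  Num.sqrt 3 - e <= K R d1 d2 d3 N r.
Proof.
move=> hd1 hd12 hd23 hB hBr hrN hBN hmN m0 hme e0.
have rd : forall d, (0 < d)%N -> (r <= N * d)%N.
  move=> d d0; have : (N <= N * d)%N by rewrite leq_pmulr.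
  lia.
have hN0 : (0 < N)%N by lia.
have Nd1 : (N <= N * d1)%N by rewrite leq_pmulr.
have Nd2 : (N <= N * d2)%N by rewrite leq_pmulr //; lia.
have Nd3 : (N <= N * d3)%N by rewrite leq_pmulr //; lia.
rewrite /K.
set S2 := (X in _ <= _ / X).
have hS2 : 0 < S2.
  have [j1 [j2 [j3 [hj1 hj2 hj3 hg hm]]]] := hB N hBN.
  have o1 : (r + j1 < 2 * r + 1)%N by lia.
  have o2 : (r + j2 < 2 * r + 1)%N by lia.
  have o3 : (r + j3 < 2 * r + 1)%N by lia.
  set i0 : trip r := (Ordinal o1, Ordinal o2, Ordinal o3).
  have e1 : ecomp N d1 (Ordinal o1) = Posz (N * d1 + j1) by rewrite /ecomp /=; lia.
  have e2 : ecomp N d2 (Ordinal o2) = Posz (N * d2 + j2) by rewrite /ecomp /=; lia.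
  have e3 : ecomp N d3 (Ordinal o3) = Posz (N * d3 + j3) by rewrite /ecomp /=; lia.
  have hi0 : `[< inM N d1 d2 d3 i0 >].
    apply/asboolP; rewrite /inM /i0 e1 e2 e3 /=.
    split => //; rewrite ltz_nat; lia.
  rewrite /S2 (bigD1 i0) //=.
  have hrest : 0 <= \sum_(i | `[< inM N d1 d2 d3 i >] && (i != i0)) Num.sqrt ((prodof N d1 d2 d3 i)%:R : R).
    by apply: sumr_ge0 => i _; exact: sqrtr_ge0.
  have ht : 0 < Num.sqrt ((prodof N d1 d2 d3 i0)%:R : R).
    rewrite sqrtr_gt0 ltr0n /prodof /i0 e1 e2 e3 /=.
    rewrite !muln_gt0; apply/andP; split; [apply/andP; split|]; lia.
  lra.
rewrite ler_pdivlMr // /S2 mulr_sumr; apply: ler_sum => -[[i1 i2 i3]] /asboolP.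
rewrite /inM /Cof /prodof /=.
rewrite (ecompE N d1 r i1 (rd _ hd1)) (ecompE N d2 r i2 (rd d2 ltac:(lia))) (ecompE N d3 r i3 (rd d3 ltac:(lia))) /=.
move=> [p1 p2 p3 hg hmin].
rewrite ltz_nat in p1; rewrite ltz_nat in p2; rewrite ltz_nat in p3.
have hi1 := ltn_ord i1; have hi2 := ltn_ord i2; have hi3 := ltn_ord i3.
apply: per_i m0 _ _ hme e0.
  exact: davison_cond.
apply: (@sbound N d1 d2 d3 r m i1 i2 i3) => //; lia.
Qed.

Theorem mainTheorem4 (R : realType) (d1 d2 d3 : nat) (r : nat -> nat) :
  (0 < d1)%N -> (d1 < d2)%N -> (d2 < d3)%N ->
  gcdn d1 (gcdn d2 d3) = 1%N ->
  minimal_gen3 d1 d2 d3 ->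
  ((fun N => ((r N)%:R : R)) @ \oo --> +oo) ->
  ((fun N => ((r N)%:R / (N%:R) : R)) @ \oo --> 0) ->
  ((Num.sqrt (3%:R : R))%:E <= limn_einf (fun N => (K R d1 d2 d3 N (r N))%:E))%E.
Proof.
move=> hd1 hd12 hd23 hg hmin hr hrN.
have [B hB] := witness_nat d1 d2 d3 hd1 hd12 hd23 hmin.
apply/lee_subgt0Pr => e e0.
have [m [m0 hme]] : exists m : nat, (0 < m)%N /\ 1 <= m%:R * e ^+ 2.
  have hx : 0 <= (e ^+ 2)^-1 by rewrite invr_ge0 sqr_ge0.
  have := archi_boundP hx; set M := Num.Def.archi_bound _ => hM.
  exists M.+1; split => //.
  have e2 : 0 < e ^+ 2 by rewrite exprn_gt0.
  rewrite -(ler_pdivrMr _ _ e2) div1r.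
  apply: (le_trans (ltW hM)); rewrite ler_nat; lia.
have [N1 _ HN1] := (cvgryPge _).1 hr (B%:R).
have [N2 _ HN2] := cvgr0_norm_lt _ hrN (2^-1 : R) ltac:(by rewrite invr_gt0).
set N0 := (N1 + N2 + B + 72 * ((d3 + 1) * (d3 + 1)) * m + 1)%N.
rewrite limn_einf_lim; apply: lime_ge; first exact: is_cvg_einfs.
exists N0 => // n /= hn.
apply/ereal_infP => _ [k /= hk <-].
have hkN : (N0 <= k)%N by apply: leq_trans hk.
have hBr : (B <= r k)%N.
  by rewrite -(ler_nat R); apply: HN1 => /=; lia.
have hrk : (2 * r k <= k)%N.
  have := HN2 k ltac:(rewrite /=; lia); rewrite /=.
  have k0 : 0 < k%:R :> R by rewrite ltr0n; lia.
  rewrite ger0_norm ?divr_ge0 // ltr_pdivrMr // => h.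
  have : ((2 * r k)%:R < k%:R :> R).
    by rewrite natrM; move: h; lra.
  rewrite ltr_nat; lia.
rewrite -EFinD lee_fin.
apply: (@K_bound R d1 d2 d3 k (r k) m e B) => //; lia.
Qed.
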